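(* Let $F$ be a positive integer, $S\in\mathrm{Sat}(F)$, and $s\in S$ with $0<s<F$ such that $\mathrm{d}_S(s)\neq\mathrm{d}_S(s')$ for all $s'\in S$ with $0<s'<s$. If $X$ is a $\mathrm{Sat}(F)$-set with $\mathrm{Sat}(F)[X]=S$, then $s\in X$.
   Context: A numerical semigroup is a subset $S\subseteq\mathbb{N}$ closed under addition, containing $0$, with $\mathbb{N}\setminus S$ finite; its Frobenius number $\mathrm{F}(S)$ is the largest integer not in $S$. For $A\subseteq\mathbb{N}$ and $a\in A$, let $\mathrm{d}_A(a)=\gcd\{x\in A\mid x\le a\}$. A numerical semigroup $S$ is saturated if $s+\mathrm{d}_S(s)\in S$ for all $s\in S\setminus\{0\}$. For a positive integer $F$, $\mathrm{Sat}(F)$ denotes the set of all saturated numerical semigroups $S$ with $\mathrm{F}(S)=F$. Let $\Delta(F+1)=\{0\}\cup\{x\in\mathbb{N}\mid x\ge F+1\}$. A set $X\subseteq\mathbb{N}$ is a $\mathrm{Sat}(F)$-set if $X\cap\Delta(F+1)=\emptyset$ and there exists $S\in\mathrm{Sat}(F)$ with $X\subseteq S$. For a $\mathrm{Sat}(F)$-set $X$, $\mathrm{Sat}(F)[X]$ denotes the intersection of all elements of $\mathrm{Sat}(F)$ containing $X$ (it is the smallest element of $\mathrm{Sat}(F)$ containing $X$). *)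

(* Defs.v *)
(* Subsets of N are represented as boolean predicates
   [pred nat]; numerical semigroups (cofinite) and Sat(F)-sets (finite)
   are decidable, so this loses nothing. *)
From mathcomp Require Import all_boot.
Set Implicit Arguments. Unset Strict Implicit. Unset Printing Implicit Defensive.

Definition numerical_semigroup (S : pred nat) : Prop :=
  [/\ S 0,
      (forall x y, S x -> S y -> S (x + y)) &
      exists N, forall n, N <= n -> S n].

Definition frobenius_is (S : pred nat) (F : nat) : Prop :=
  ~~ S F /\ (forall n, F < n -> S n).

Definition dA (A : pred nat) (a : nat) : nat :=
  \big[gcdn/0]_(0 <= x < a.+1 | A x) x.

Definition saturated (S : pred nat) : Prop :=
  numerical_semigroup S /\ (forall s, S s -> 0 < s -> S (s + dA S s)).

Definition Sat (F : nat) (S : pred nat) : Prop :=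
  saturated S /\ frobenius_is S F.

Definition Delta (m : nat) : pred nat := fun x => (x == 0) || (m <= x).

Definition SatSet (F : nat) (X : pred nat) : Prop :=
  (forall x, X x -> ~~ Delta F.+1 x) /\
  exists S, Sat F S /\ (forall x, X x -> S x).

Definition in_SatHull (F : nat) (X : pred nat) (x : nat) : Prop :=
  forall T, Sat F T -> (forall y, X y -> T y) -> T x.

(* Main.v *)
Require Import Defs.
From mathcomp Require Import all_boot zify.
Set Implicit Arguments. Unset Strict Implicit.

Lemma dA_rec (A : pred nat) n : dA A n.+1 = if A n.+1 then gcdn (dA A n) n.+1 else dA A n.
Proof.
rewrite /dA big_mkcond big_nat_recr //= -big_mkcond.
by case: (A n.+1) => //=; rewrite gcdn0.
Qed.

Lemma dA0 (A : pred nat) : dA A 0 = 0.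
Proof. by rewrite /dA big_mkcond big_nat1; case: (A 0). Qed.

Lemma dA_dvd (A : pred nat) n x : A x -> x <= n -> dA A n %| x.
Proof.
elim: n => [|n IH] Ax.
  by rewrite leqn0 => /eqP ->; rewrite dA0.
rewrite leq_eqVlt => /orP [/eqP E|]; rewrite dA_rec.
  by subst x; rewrite Ax dvdn_gcdr.
rewrite ltnS => /IH; move/(_ Ax) => H; case: (A n.+1) => //.
exact: dvdn_trans (dvdn_gcdl _ _) H.
Qed.

Lemma dvd_dA (A : pred nat) n d : (forall x, A x -> x <= n -> d %| x) -> d %| dA A n.
Proof.
elim: n => [|n IH] H; first by rewrite dA0 dvdn0.
have H' : d %| dA A n by apply: IH => x Ax xn; apply: H => //; exact: leqW.
rewrite dA_rec; case Hn: (A n.+1) => //.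
by rewrite dvdn_gcd H' H.
Qed.

Lemma dA_pos (A : pred nat) n x : A x -> 0 < x -> x <= n -> 0 < dA A n.
Proof.
move=> Ax x0 xn; have := dA_dvd Ax xn; case: (dA A n) => // .
by rewrite dvd0n => /eqP E; move: x0; rewrite E.
Qed.

Lemma exists_repr (A : pred nat) n : (exists x, [/\ A x, 0 < x & x <= n]) ->
  exists s', [/\ A s', 0 < s', s' <= n & dA A s' = dA A n].
Proof.
elim: n => [|n IH] [x [Ax x0 xn]]; first by move: x0 xn; case: x Ax.
case An: (A n.+1); first by exists n.+1.
have xn' : x <= n.
  move: xn; rewrite leq_eqVlt => /orP [/eqP E|//]; by subst x; rewrite An in Ax.
have [s' [As' s0 sn E]] := IH (ex_intro _ x (And3 Ax x0 xn')).
exists s'; split => //; first exact: leqW.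
by rewrite dA_rec An.
Qed.

Lemma dA_succ_in (A : pred nat) n : A n.+1 -> dA A n %| n.+1 -> dA A n.+1 = dA A n.
Proof. by move=> An d; rewrite dA_rec An; apply/gcdn_idPl. Qed.

Lemma sat_mult S : saturated S -> forall L x, S x -> 0 < x -> dA S x %| L -> S (x + L).
Proof.
move=> [[S0 Sadd _] Ssat] L.
elim: L {-2}L (leqnn L) => [|N IH] L HL x Sx x0 dL.
  by move: HL; rewrite leqn0 => /eqP ->; rewrite addn0.
case: L HL dL => [|L] HL dL; first by rewrite addn0.
set d := dA S x.
have d0 : 0 < d by apply: (dA_pos Sx x0).
have dle : d <= L.+1 by apply: dvdn_leq.
have Sy := Ssat x Sx x0.
have -> : x + L.+1 = (x + d) + (L.+1 - d) by lia.
apply: IH => //.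
- lia.
- lia.
- have h1 : dA S (x + d) %| d.
    by apply: dvd_dA => y Sy' yx; apply: dA_dvd => //; lia.
  apply: dvdn_trans h1 _. by rewrite dvdn_sub.
Qed.

Theorem lemma38 (F : nat) (S : pred nat) (s : nat) (X : pred nat) :
  0 < F -> Sat F S -> S s -> 0 < s < F ->
  (forall s', S s' -> 0 < s' < s -> dA S s <> dA S s') ->
  SatSet F X ->
  (forall x, S x <-> in_SatHull F X x) ->
  X s.
Proof.
move=> F0 [Ssat [SF Sbig]] Ss /andP [s0 sF] Hd _ Hull.
have Ssat' := Ssat.
case: Ssat' => [[S0 Sadd _] Ssat2].
set g := dA S s.-1.
have key : forall t, S t -> 0 < t < s -> ~~ (g %| s).
  move=> t St /andP [t0 ts]; apply/negP => gs.
  have [s' [Ss' s'0 s's E]] : exists s', [/\ S s', 0 < s', s' <= s.-1 & dA S s' = dA S s.-1].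
    apply: exists_repr; exists t; split => //; lia.
  apply: (Hd s' Ss'); first lia.
  rewrite E /g.
  have Ss1 : S s.-1.+1 by rewrite prednK.
  have gs1 : dA S s.-1 %| s.-1.+1 by rewrite prednK.
  by have := dA_succ_in Ss1 gs1; rewrite prednK.
have notsum : forall a b, S a -> S b -> 0 < a -> 0 < b -> a + b != s.
  move=> a b Sa Sb a0 b0; apply/negP => /eqP E.
  apply/negP: (key a Sa ltac:(lia)).
  rewrite -E dvdn_add //; apply: dA_dvd => //; lia.
case Xs: (X s) => //; exfalso.
pose T : pred nat := [pred x | S x && (x != s)].
have SatT : Sat F T.
  split; [split; [split|] | split].
  - by rewrite /T /= S0; case: s s0 {Ss Hd key notsum Xs T g sF}.
  - move=> x y /andP [Sx xs] /andP [Sy ys]; apply/andP; split; first exact: Sadd.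
    case: x Sx xs => [|x] Sx xs; first by rewrite add0n.
    case: y Sy ys => [|y] Sy ys; first by rewrite addn0.
    exact: notsum.
  - exists F.+1 => n Fn; apply/andP; split; first exact: Sbig.
    apply/eqP => E; lia.
  - move=> t /andP [St ts] t0.
    have dT0 : 0 < dA T t by apply: (@dA_pos T t t) => //; rewrite /T /= St ts.
    apply/andP; split.
      apply: sat_mult => //.
      apply: dvd_dA => y /andP [Sy _] yt; exact: dA_dvd.
    apply/eqP => E.
    apply/negP: (key t St ltac:(lia)).
    rewrite -E dvdn_add //.
      apply: dA_dvd => //; lia.
    apply: dvd_dA => y /andP [Sy _] yt; apply: dA_dvd => //; lia.
  - by rewrite /T /= negb_and SF.
  - move=> n Fn; apply/andP; split; first exact: Sbig.
    apply/eqP => E; lia.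
have /Hull HS := Ss.
have : T s.
  apply: HS => //.
  move=> y Xy; apply/andP; split.
    by apply/Hull => T' _ H; exact: H.
  by apply/eqP => E; subst y; rewrite Xs in Xy.
by rewrite /T /= eqxx andbF.
Qed.
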